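(* Let $p,q$ be positive integers, with notation as in the context, and let $s$ be the integer with $T_{e_s}=2^sT_1$. Let $T_c$ be a positive integer which is either $1$ or of the form $T_c=2^{l_c}T_1$ with $0\le l_c\le s+1$, and define $$e_0=\begin{cases}\max(e_p,e_q) & \text{if } T_c=1;\\ e_{s,g}+1 & \text{if } l_c=0,\ T_1\ne 1;\\ e_{s,g}+2l_c-1 & \text{if } 1\le l_c\le s+1.\end{cases}$$ Then for every integer $e>e_0$, every point $(x,y)$ lying on a cycle of length $T_c$ of the Cat map over $\mathbb{Z}_{2^e}$ satisfies $x\equiv 0\pmod 2$ and $y\equiv 0\pmod 2$.
   Context: Let $\mathbf{C}=\begin{bmatrix}1 & p\\ q & 1+pq\end{bmatrix}$. The Cat map over $\mathbb{Z}_{2^e}$ is the bijection $v\mapsto \mathbf{C}v\bmod 2^e$ of $\mathbb{Z}_{2^e}^2$; a point lies on a cycle of length $n$ if $n$ is the least positive integer with $\mathbf{C}^n v\equiv v\pmod{2^e}$. $T_e$ denotes the least period of the Cat map over $\mathbb{Z}_{2^e}$ (least $n\ge1$ with $\mathbf{C}^n\equiv I\pmod{2^e}$). Put $A=pq+2$, $B=\sqrt{A^2-4}$, $G_n=\left(\frac{A+B}{2}\right)^n+\left(\frac{A-B}{2}\right)^n$, $H_n=\frac{1}{B}\left(\left(\frac{A+B}{2}\right)^n-\left(\frac{A-B}{2}\right)^n\right)$ (integers). For a nonzero integer $m$ let $v_2(m)$ be the largest $x$ with $2^x\mid m$. Let $e_p=v_2(p)$, $e_q=v_2(q)$; $T_1=3$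 if $p,q$ are both odd, $T_1=2$ if exactly one of $p,q$ is odd, $T_1=1$ if both are even; $\hat h=-1$ if $e_p+e_q=0$ and $\hat h=\min(e_p,e_q)$ otherwise; $e_{s,h}=v_2(H_{T_1})$; $m_0=1$ if $\frac12 G_{T_1}\not\equiv 1\pmod 4$ and $m_0=0$ otherwise; $e_{s,g}=v_2\left(\frac12 G_{2^{m_0}T_1}-1\right)$; $x_0=e_{s,h}+m_0+\hat h-e_{s,g}$ if $e_{s,g}<e_{s,h}+m_0+\hat h$ and $x_0=0$ otherwise; and $e_s=e_{s,h}+m_0+\hat h+x_0$. The cases defining $e_0$ are read in order. *)

(* Defs.v *)
From mathcomp Require Import all_boot all_order all_algebra.
Set Implicit Arguments. Unset Strict Implicit. Unset Printing Implicit Defensive.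
Import Order.TTheory GRing.Theory Num.Theory.
Local Open Scope ring_scope.

Definition catC (p q : int) : 'M[int]_2 :=
  \matrix_(i < 2, j < 2)
    if (i : nat) == 0%N then (if (j : nat) == 0%N then 1 else p)
    else (if (j : nat) == 0%N then q else 1 + p * q).

Definition vec2 (x y : int) : 'cV[int]_2 :=
  \col_(i < 2) (if (i : nat) == 0%N then x else y).

Definition mod2e (e : nat) : int := (2 ^ e)%N%:Z.

Definition eqmodv (e : nat) (u v : 'cV[int]_2) : Prop :=
  forall i : 'I_2, (u i ord0 = v i ord0 %[mod mod2e e])%Z.

Definition eqmodm (e : nat) (M N : 'M[int]_2) : Prop :=
  forall i j : 'I_2, (M i j = N i j %[mod mod2e e])%Z.

Definition on_cycle (p q : int) (e : nat) (v : 'cV[int]_2) (n : nat) : Prop :=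
  [/\ (0 < n)%N, eqmodv e (catC p q ^+ n *m v) v &
      forall m : nat, (0 < m < n)%N -> ~ eqmodv e (catC p q ^+ m *m v) v].

Definition least_period (p q : int) (e : nat) (n : nat) : Prop :=
  [/\ (0 < n)%N, eqmodm e (catC p q ^+ n) 1 &
      forall m : nat, (0 < m < n)%N -> ~ eqmodm e (catC p q ^+ m) 1].

(* G_n and H_n (Lucas-type sequences with trace A), via their recurrences:
   G_0 = 2, G_1 = A, H_0 = 0, H_1 = 1, X_{n+2} = A X_{n+1} - X_n. *)
Fixpoint Gseq (A : int) (n : nat) : int :=
  match n with
  | 0 => 2
  | 1 => A
  | S ((S m) as k) => A * Gseq A k - Gseq A m
  end.

Fixpoint Hseq (A : int) (n : nat) : int :=
  match n with
  | 0 => 0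
  | 1 => 1
  | S ((S m) as k) => A * Hseq A k - Hseq A m
  end.

Definition v2 (m : int) : nat := logn 2 `|m|%N.

Section Params.
Variables p q : nat.

Definition Acat : int := (p * q + 2)%N%:Z.
Definition e_p : nat := logn 2 p.
Definition e_q : nat := logn 2 q.
Definition T1 : nat :=
  if odd p && odd q then 3 else if odd p || odd q then 2 else 1.
Definition hhat : int :=
  if (e_p + e_q == 0)%N then -1 else (minn e_p e_q)%:Z.
Definition e_sh : nat := v2 (Hseq Acat T1).
Definition m0 : nat :=
  if modz (divz (Gseq Acat T1) 2) 4 != 1 then 1 else 0.
Definition e_sg : nat := v2 (divz (Gseq Acat (2 ^ m0 * T1)) 2 - 1).
Definition e_base : int := e_sh%:Z + m0%:Z + hhat.
Definition x0 : int := if e_sg%:Z < e_base then e_base - e_sg%:Z else 0.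
Definition e_s : int := e_base + x0.

(* e_0, cases read in order *)
Definition e_0 (Tc lc : nat) : int :=
  if Tc == 1%N then (maxn e_p e_q)%:Z
  else if lc == 0%N then e_sg%:Z + 1
  else e_sg%:Z + 2 * lc%:Z - 1.
End Params.

(* Main.v *)
Require Import Defs.
From mathcomp Require Import all_boot all_order all_algebra.
From mathcomp Require Import ring zify.
Import Order.TTheory GRing.Theory Num.Theory.
Local Open Scope ring_scope.
Set Implicit Arguments. Unset Strict Implicit.

Notation i0 := (@ord0 1).
Notation i1 := (@ord_max 1).

Lemma ord2_cases (i : 'I_2) : i = i0 \/ i = i1.
Proof. by case: i => [[|[|//]]] Hi; [left|right]; apply/val_inj. Qed.

Lemma mx2_ext (X Y : 'M[int]_2) :
  X i0 i0 = Y i0 i0 -> X i0 i1 = Y i0 i1 -> X i1 i0 = Y i1 i0 -> X i1 i1 = Y i1 i1 -> X = Y.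
Proof.
move=> h1 h2 h3 h4; apply/matrixP => i j.
by case: (ord2_cases i) => ->; case: (ord2_cases j) => ->.
Qed.

Lemma sum2 (F : 'I_2 -> int) : \sum_(i < 2) F i = F i0 + F i1.
Proof.
rewrite big_ord_recl big_ord_recl big_ord0 addr0; congr (_ + F _).
by apply/val_inj.
Qed.

Lemma mulE (X Y : 'M[int]_2) i j : (X * Y) i j = X i i0 * Y i0 j + X i i1 * Y i1 j.
Proof. by rewrite -mulmxE mxE sum2. Qed.

Lemma oneE i j : (1 : 'M[int]_2) i j = (i == j)%:R.
Proof. by rewrite mxE. Qed.

Definition tr2 (X : 'M[int]_2) := X i0 i0 + X i1 i1.
Definition det2 (X : 'M[int]_2) := X i0 i0 * X i1 i1 - X i0 i1 * X i1 i0.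

Lemma det2M X Y : det2 (X * Y) = det2 X * det2 Y.
Proof. rewrite /det2 !mulE; ring. Qed.

Lemma CH2 (X : 'M[int]_2) : X * X = tr2 X *: X - det2 X *: 1.
Proof.
apply: mx2_ext; rewrite !mulE !mxE /tr2 /det2 /=; ring.
Qed.

Lemma det2_sub1 X : det2 (X - 1) = det2 X - tr2 X + 1.
Proof. rewrite /det2 /tr2 !mxE /=; ring. Qed.

Lemma det2Z c X : det2 (c *: X) = c ^+ 2 * det2 X.
Proof. rewrite /det2 !mxE; ring. Qed.

Lemma tr2D X Y : tr2 (X + Y) = tr2 X + tr2 Y.
Proof. rewrite /tr2 !mxE; ring. Qed.
Lemma tr2Z c X : tr2 (c *: X) = c * tr2 X.
Proof. rewrite /tr2 !mxE; ring. Qed.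
Lemma tr2N X : tr2 (- X) = - tr2 X.
Proof. rewrite /tr2 !mxE; ring. Qed.
Lemma tr21 : tr2 1 = 2.
Proof. by rewrite /tr2 !mxE. Qed.

Lemma mod2eE e : mod2e e = 2 ^+ e.
Proof. by rewrite /mod2e -natz natrX. Qed.

Lemma dvdzD' (d a b : int) : (d %| a)%Z -> (d %| b)%Z -> (d %| a + b)%Z.
Proof. move=> /dvdzP[u ->] /dvdzP[v ->]; apply/dvdzP; exists (u + v); ring. Qed.
Lemma dvdzMl' (d a b : int) : (d %| b)%Z -> (d %| a * b)%Z.
Proof. move=> /dvdzP[v ->]; apply/dvdzP; exists (a * v); ring. Qed.
Lemma dvdzN' (d a : int) : (d %| a)%Z -> (d %| - a)%Z.
Proof. move=> /dvdzP[v ->]; apply/dvdzP; exists (- v); ring. Qed.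

Lemma not2odd (u : int) : ~~ (2 %| 2 * u + 1)%Z.
Proof.
apply/negP => /dvdz_mod0P; rewrite mulrC.
by have /= -> := modzMDl u 1 2.
Qed.

Lemma pow_odd_contra (N D : nat) (u : int) :
  (D < N)%N -> (2 ^+ N %| 2 ^+ D * (2 * u + 1))%Z -> False.
Proof.
move=> hDN /dvdzP[w hw].
have hN : N = (D + (N - D - 1) + 1)%N by lia.
rewrite hN !exprD expr1 in hw.
have h2 : 2 ^+ D != 0 :> int by rewrite expf_neq0.
have : 2 * u + 1 = (w * 2 ^+ (N - D - 1)) * 2.
  apply: (mulfI h2); rewrite hw; ring.
move=> h; have := not2odd u; rewrite h.
by rewrite dvdz_mull // dvdzz.
Qed.

Lemma odd_abs_odd (u : int) : odd (absz (2 * u + 1)%R).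
Proof. have := not2odd u; by rewrite dvdzE /= dvdn2 negbK. Qed.

Lemma v2_pow_odd (d : nat) (u : int) : v2 (2 ^+ d * (2 * u + 1)) = d.
Proof.
rewrite /v2 abszM.
have -> : absz (2 ^+ d : int) = (2 ^ d)%N by rewrite abszX.
have ho := odd_abs_odd u.
have hpos : (0 < absz (2 * u + 1)%R)%N by case: ((absz (2 * u + 1)%R)) ho.
rewrite lognM ?expn_gt0 // pfactorK // logn_coprime ?addn0 //.
by rewrite coprime2n.
Qed.

Lemma decomp2 (w : int) : 0 < w -> exists k u, w = 2 ^+ k * (2 * u + 1).
Proof.
move=> hw.
have hpos : (0 < `|w|)%N by rewrite absz_gt0 gt_eqF.
have [m hm e] := pfactor_coprime (isT : prime 2) hpos.
set L := logn 2 `|w| in e *.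
exists L, (m./2)%:Z.
have hw' : w = ((absz w))%:Z by rewrite gtz0_abs.
rewrite {1}hw' e PoszM mulrC; congr (_ * _).
- by rewrite -natz natrX.
- rewrite coprime2n in hm.
  have := odd_double_half m; rewrite hm => hh.
  rewrite -{1}hh -muln2 PoszD PoszM /=; ring.
Qed.

Lemma esg_val (G : int) (d : nat) (u : int) :
  G - 2 = 2 ^+ d.+1 * (2 * u + 1) -> v2 (divz G 2 - 1) = d.
Proof.
move=> h.
have -> : G = (2 ^+ d * (2 * u + 1) + 1) * 2.
  have -> : G = (G - 2) + 2 by ring.
  rewrite h exprS; ring.
rewrite mulzK //.
have -> : 2 ^+ d * (2 * u + 1) + 1 - 1 = 2 ^+ d * (2 * u + 1) by ring.
exact: v2_pow_odd.
Qed.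

Section Cat.
Variables p q : nat.
Local Notation C := (catC p%:Z q%:Z).
Local Notation A := (Acat p q).

Lemma AE : A = p%:Z * q%:Z + 2.
Proof. by rewrite /Acat PoszD PoszM. Qed.

Lemma C00 : C i0 i0 = 1. Proof. by rewrite mxE. Qed.
Lemma C01 : C i0 i1 = p%:Z. Proof. by rewrite mxE. Qed.
Lemma C10 : C i1 i0 = q%:Z. Proof. by rewrite mxE. Qed.
Lemma C11 : C i1 i1 = 1 + p%:Z * q%:Z. Proof. by rewrite mxE. Qed.

Lemma trC : tr2 C = A.
Proof. rewrite /tr2 C00 C11 AE; ring. Qed.
Lemma detC : det2 C = 1.
Proof. rewrite /det2 C00 C11 C01 C10; ring. Qed.

Lemma CC : C * C = A *: C - 1.
Proof. by rewrite CH2 trC detC scale1r. Qed.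

Lemma detCn n : det2 (C ^+ n) = 1.
Proof.
elim: n => [|n IH]; first by rewrite expr0 /det2 !mxE.
by rewrite exprS det2M detC IH mulr1.
Qed.

Lemma CnSS n : C ^+ n.+2 = A *: C ^+ n.+1 - C ^+ n.
Proof.
have -> : C ^+ n.+2 = C ^+ n * (C * C) by rewrite -expr2 -exprD addn2.
by rewrite CC mulrBr mulr1 -scalerAr -exprSr.
Qed.

Lemma G_tr n : Gseq A n = tr2 (C ^+ n).
Proof.
suff : Gseq A n = tr2 (C ^+ n) /\ Gseq A n.+1 = tr2 (C ^+ n.+1) by case.
elim: n => [|n [IH1 IH2]].
  by rewrite expr0 expr1 tr21 trC.
split=> //.
have -> : Gseq A n.+2 = A * Gseq A n.+1 - Gseq A n by [].
by rewrite CnSS tr2D tr2N tr2Z IH1 IH2.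
Qed.

Lemma G_double n : Gseq A (n * 2) - 2 = (Gseq A n - 2) * (Gseq A n + 2).
Proof.
rewrite !G_tr exprM expr2 CH2 tr2D tr2N !tr2Z tr21 detCn.
ring.
Qed.

Lemma val_double n d u : Gseq A n - 2 = 2 ^+ (d + 3) * (2 * u + 1) ->
  exists u', Gseq A (n * 2) - 2 = 2 ^+ (d + 5) * (2 * u' + 1).
Proof.
move=> h; rewrite G_double.
have -> : Gseq A n + 2 = (Gseq A n - 2) + 4 by ring.
rewrite h.
set t := 2 ^+ d * (2 * u + 1).
exists (2 * u * t + u + t).
rewrite /t !exprD; ring.
Qed.

Lemma mx_double (X M : 'M[int]_2) k : X = 1 + 2 ^+ k.+1 *: M ->
  X * X = 1 + 2 ^+ k.+2 *: (M + 2 ^+ k *: (M * M)).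
Proof.
move=> ->; apply: mx2_ext; rewrite !mulE !mxE ?sum2 ?mxE /= !exprS; ring.
Qed.

Lemma dvd_mx (X : 'M[int]_2) : (forall i j, (2 %| (X - 1) i j)%Z) ->
  X = 1 + 2 ^+ 1 *: \matrix_(i, j) ((X - 1) i j %/ 2)%Z.
Proof.
move=> h; apply/matrixP => i j.
have := divzK (h i j); rewrite !mxE => e; rewrite expr1 mulrC e; ring.
Qed.

End Cat.

Lemma parZ (n : nat) : n%:Z = 2 * (n./2)%:Z + (odd n)%:Z.
Proof.
have h := odd_double_half n.
rewrite -{1}h PoszD -muln2 PoszM; ring.
Qed.

Section Base.
Variables p q : nat.
Hypotheses (hp : (0 < p)%N) (hq : (0 < q)%N).
Local Notation C := (catC p%:Z q%:Z).
Local Notation A := (Acat p q).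

Lemma C2E : C ^+ 2 - 1 = A *: C - 1 - 1.
Proof. by rewrite expr2 CC. Qed.
Lemma C2E' : C ^+ 2 = A *: C - 1.
Proof. by rewrite expr2 CC. Qed.
Lemma C3E : C ^+ 3 - 1 = A *: (A *: C - 1) - C - 1.
Proof. by rewrite (CnSS p q 1) expr1 C2E'. Qed.

Lemma base_mx : exists M, C ^+ (T1 p q) = 1 + 2 ^+ 1 *: M.
Proof.
eexists; apply: dvd_mx => i j.
have hpZ := parZ p; have hqZ := parZ q.
set a := (p./2)%:Z in hpZ; set b := (q./2)%:Z in hqZ.
rewrite /T1; case op: (odd p) in hpZ *; case oq: (odd q) in hqZ *; rewrite /= ?addr0 in hpZ hqZ *.
- rewrite C3E; case: (ord2_cases i) => ->; case: (ord2_cases j) => ->;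
  rewrite !mxE /= AE hpZ hqZ; apply/dvdzP.
  + exists ((2 * (2*a*b+a+b+1) - 1) * (2*a*b+a+b+1 + 1)); ring.
  + exists (2 * (2*a*b+a+b+1) * (2*a*b+a+b+1 + 1) * (2 * a + 1)); ring.
  + exists (2 * (2*a*b+a+b+1) * (2*a*b+a+b+1 + 1) * (2 * b + 1)); ring.
  + exists ((2*a*b+a+b+1 + 1) * (2 * (2*a*b+a+b+1) * (1 + (2*a+1)*(2*b+1)) - 1)); ring.
- rewrite C2E; case: (ord2_cases i) => ->; case: (ord2_cases j) => ->;
  rewrite !mxE /= AE hpZ hqZ; apply/dvdzP.
  + exists ((2*a+1) * b); ring.
  + exists (((2*a+1) * b + 1) * (2 * a + 1)); ring.
  + exists (((2*a+1) * (2 * b) + 2) * b); ring.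
  + exists ((2*a+1) * b * ((2*a+1) * (2*b) + 3)); ring.
- rewrite C2E; case: (ord2_cases i) => ->; case: (ord2_cases j) => ->;
  rewrite !mxE /= AE hpZ hqZ; apply/dvdzP.
  + exists (a * (2*b+1)); ring.
  + exists (((2*a) * (2*b+1) + 2) * a); ring.
  + exists ((a * (2*b+1) + 1) * (2 * b + 1)); ring.
  + exists (a * (2*b+1) * ((2*a) * (2*b+1) + 3)); ring.
- rewrite expr1; case: (ord2_cases i) => ->; case: (ord2_cases j) => ->;
  rewrite !mxE /= ?hpZ ?hqZ; apply/dvdzP.
  + exists 0; ring.
  + exists a; ring.
  + exists b; ring.
  + exists (2 * a * b); ring.
Qed.

Lemma base_G : exists w, Gseq A (T1 p q) - 2 = 4 * w /\ 0 < w.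
Proof.
have hpZ := parZ p; have hqZ := parZ q.
set a := (p./2)%:Z in hpZ; set b := (q./2)%:Z in hqZ.
have hp' : 0 < p%:Z by rewrite ltz_nat.
have hq' : 0 < q%:Z by rewrite ltz_nat.
have ha : 0 <= a by [].
have hb : 0 <= b by [].
rewrite /T1; case op: (odd p) in hpZ *; case oq: (odd q) in hqZ *;
  rewrite /= ?addr0 in hpZ hqZ *; rewrite AE.
- exists ((2*a+1)*(2*b+1) * (2*a*b+a+b+2)^+2); split.
    rewrite hpZ hqZ; ring.
  rewrite hpZ hqZ in hp' hq' *; nia.
- exists ((2*a+1) * b * ((2*a+1) * b + 2)); split.
    rewrite hpZ hqZ; ring.
  rewrite hpZ hqZ in hp' hq' *; nia.
- exists (a * (2*b+1) * (a * (2*b+1) + 2)); split.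
    rewrite hpZ hqZ; ring.
  rewrite hpZ hqZ in hp' hq' *; nia.
- exists (a * b); split.
    rewrite hpZ hqZ; ring.
  rewrite hpZ hqZ in hp' hq' *; nia.
Qed.

End Base.

Section Val.
Variables p q : nat.
Hypotheses (hp : (0 < p)%N) (hq : (0 < q)%N).
Local Notation A := (Acat p q).

Lemma base_val :
  (exists D u, Gseq A (T1 p q) - 2 = 2 ^+ D * (2 * u + 1) /\ (D <= e_sg p q + 1)%N) /\
  (exists d u, Gseq A (T1 p q * 2) - 2 = 2 ^+ (d + 3) * (2 * u + 1) /\ (d + 3 <= e_sg p q + 3)%N).
Proof.
have [w [hw wpos]] := base_G hp hq.
have [k [u hku]] := decomp2 wpos.
rewrite /e_sg /m0.
have hG : Gseq A (T1 p q) = (Gseq A (T1 p q) - 2) + 2 by ring.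
case: k hku => [|k] hku.
- rewrite expr0 mul1r in hku.
  have hdiv : divz (Gseq A (T1 p q)) 2 = u * 4 + 3.
    rewrite hG hw hku.
    have -> : 4 * (2 * u + 1) + 2 = (u * 4 + 3) * 2 by ring.
    by rewrite mulzK.
  have hm : (modz (divz (Gseq A (T1 p q)) 2) 4 != 1) = true.
    by rewrite hdiv modzMDl.
  rewrite hm.
  have hu : 0 < u + 1.
    have : 0 < 2 * u + 1 by rewrite -hku.
    lia.
  have [j [t hjt]] := decomp2 hu.
  have h2 : Gseq A (T1 p q * 2) - 2 = 2 ^+ (j + 4).+1 * (2 * (2*u*t+u+t) + 1).
    rewrite G_double.
    have -> : Gseq A (T1 p q) + 2 = (Gseq A (T1 p q) - 2) + 4 by ring.
    rewrite hw hku.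
    have -> : 4 * (2 * u + 1) * (4 * (2 * u + 1) + 4) = 32 * (2 * u + 1) * (u + 1) by ring.
    rewrite hjt !exprS exprD; ring.
  have -> : (2 ^ 1 * T1 p q)%N = (T1 p q * 2)%N by rewrite mulnC.
  rewrite (esg_val h2); split.
    exists 2%N, u; split; last by lia.
    by rewrite hw hku.
  exists (j + 2)%N, (2*u*t+u+t); split; last by lia.
  by rewrite h2; congr (2 ^+ _ * _); lia.
- have h1 : Gseq A (T1 p q) - 2 = 2 ^+ (k + 2).+1 * (2 * u + 1).
    rewrite hw hku !exprS exprD; ring.
  have hdiv : divz (Gseq A (T1 p q)) 2 = (2 ^+ k * (2 * u + 1)) * 4 + 1.
    rewrite hG h1.
    have -> : 2 ^+ (k + 2).+1 * (2 * u + 1) + 2 = ((2 ^+ k * (2 * u + 1)) * 4 + 1) * 2.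
      rewrite !exprS exprD; ring.
    by rewrite mulzK.
  have hm : (modz (divz (Gseq A (T1 p q)) 2) 4 != 1) = false.
    by rewrite hdiv modzMDl.
  rewrite hm.
  have -> : (2 ^ 0 * T1 p q)%N = T1 p q by rewrite mul1n.
  rewrite (esg_val h1); split.
    exists (k + 3)%N, u; split; last by lia.
    by rewrite h1 addn3 addn2.
  have h1' : Gseq A (T1 p q) - 2 = 2 ^+ (k + 3) * (2 * u + 1) by rewrite h1 addn3 addn2.
  have [u' hu'] := val_double h1'.
  exists (k + 2)%N, u'; split; last by lia.
  by rewrite hu'; congr (2 ^+ _ * _); lia.
Qed.

End Val.

Lemma coprime_pow_odd (e : nat) (x : int) : ~~ (2 %| x)%Z -> coprimez (2 ^+ e) x.
Proof.
move=> hx; case: e => [|e]; first by rewrite expr0 /coprimez /gcdz /= gcd1n.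
rewrite coprimez_pexpl //.
rewrite dvdzE /= dvdn2 negbK in hx.
by change (coprime 2 `|x|); rewrite coprime2n.
Qed.

Lemma vec_lemma (c : int) (M : 'M[int]_2) x y e :
  eqmodv e ((1 + c *: M) *m vec2 x y) (vec2 x y) ->
  ~~ (2 %| x)%Z || ~~ (2 %| y)%Z -> (2 ^+ e %| c * det2 M)%Z.
Proof.
move=> H hodd.
have h0 := H i0; have h1 := H i1.
move/eqP: h0; move/eqP: h1.
rewrite !mxE !sum2 !mxE /= !eqz_mod_dvd mod2eE.
set w0 := c * (M i0 i0 * x + M i0 i1 * y).
set w1 := c * (M i1 i0 * x + M i1 i1 * y).
move=> d1 d0.
have e0 : w0 = (1 + c * M i0 i0) * x + (0 + c * M i0 i1) * y - x by rewrite /w0; ring.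
have e1 : w1 = (0 + c * M i1 i0) * x + (1 + c * M i1 i1) * y - y by rewrite /w1; ring.
rewrite -e0 in d0; rewrite -e1 in d1.
have dx : (2 ^+ e %| c * det2 M * x)%Z.
  have -> : c * det2 M * x = M i1 i1 * w0 + (- (M i0 i1 * w1)).
    rewrite /w0 /w1 /det2; ring.
  by apply: dvdzD'; [apply: dvdzMl' | apply/dvdzN'/dvdzMl'].
have dy : (2 ^+ e %| c * det2 M * y)%Z.
  have -> : c * det2 M * y = M i0 i0 * w1 + (- (M i1 i0 * w0)).
    rewrite /w0 /w1 /det2; ring.
  by apply: dvdzD'; [apply: dvdzMl' | apply/dvdzN'/dvdzMl'].
case/orP: hodd => ho.
- by rewrite Gauss_dvdzl ?coprime_pow_odd in dx.
- by rewrite Gauss_dvdzl ?coprime_pow_odd in dy.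
Qed.

Section Iter.
Variables p q : nat.
Hypotheses (hp : (0 < p)%N) (hq : (0 < q)%N).
Local Notation C := (catC p%:Z q%:Z).
Local Notation A := (Acat p q).

Lemma dbl_idx l : (2 ^ l.+1 * T1 p q = (2 ^ l * T1 p q) * 2)%N.
Proof. by rewrite expnS -mulnA mulnC. Qed.

Lemma iter_mx lc : exists M, C ^+ (2 ^ lc * T1 p q) = 1 + 2 ^+ lc.+1 *: M.
Proof.
elim: lc => [|l [M hM]].
  by rewrite expn0 mul1n; apply: base_mx.
eexists; rewrite dbl_idx exprM expr2; apply: mx_double; exact: hM.
Qed.

Lemma iter_val l : exists d u,
  Gseq A (2 ^ l.+1 * T1 p q) - 2 = 2 ^+ (d + 3) * (2 * u + 1) /\
  (d + 3 <= e_sg p q + 3 + 2 * l)%N.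
Proof.
elim: l => [|l [d [u [h hd]]]].
  have [_ [d [u [h hd]]]] := base_val hp hq.
  by exists d, u; rewrite expn1 mulnC; split => //; lia.
have [u' hu'] := val_double h.
exists (d + 2)%N, u'; rewrite dbl_idx; split; last by lia.
by rewrite hu'; congr (2 ^+ _ * _); lia.
Qed.

End Iter.

Theorem lemma8 (p q s Tc lc : nat) :
  (0 < p)%N -> (0 < q)%N ->
  least_period p%:Z q%:Z `|e_s p q|%N (2 ^ s * T1 p q)%N ->
  (Tc = 1%N \/ (Tc = (2 ^ lc * T1 p q)%N /\ (lc <= s + 1)%N)) ->
  forall e : nat, e_0 p q Tc lc < e%:Z ->
  forall x y : int, on_cycle p%:Z q%:Z e (vec2 x y) Tc ->
  (2 %| x)%Z /\ (2 %| y)%Z.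
Proof.
move=> hp hq _ hTc e he x y [hpos hcyc _].
case: (boolP ((2 %| x)%Z && (2 %| y)%Z)) => [/andP//|]; rewrite negb_and => hodd.
exfalso.
have [hT1 | hT1] := eqVneq Tc 1%N.
- subst Tc; rewrite /e_0 eqxx ltz_nat in he.
  move: hcyc; rewrite expr1 => H.
  have h0 := H i0; have h1 := H i1.
  move/eqP: h0; move/eqP: h1.
  rewrite !mxE !sum2 !mxE /= !eqz_mod_dvd mod2eE => d1 d0.
  have dpy : (2 ^+ e %| p%:Z * y)%Z.
    by have <- : 1 * x + p%:Z * y - x = p%:Z * y by ring.
  have dqx : (2 ^+ e %| q%:Z * x)%Z.
    have -> : q%:Z * x = (q%:Z * x + (1 + p%:Z * q%:Z) * y - y) + - (q%:Z * (p%:Z * y)) by ring.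
    by apply: dvdzD' => //; apply/dvdzN'/dvdzMl'.
  have key : forall (n : nat) (z : int), (0 < n)%N -> (2 ^+ e %| n%:Z * z)%Z ->
      ~~ (2 %| z)%Z -> (e <= logn 2 n)%N.
    move=> n z hn hd hz.
    rewrite Gauss_dvdzl ?coprime_pow_odd // dvdzE abszX /= in hd.
    by rewrite -pfactor_dvdn.
  case/orP: hodd => ho.
  + have := key _ _ hq dqx ho; rewrite /e_q in he; lia.
  + have := key _ _ hp dpy ho; rewrite /e_p in he; lia.
- case: hTc => [hTc1|[hTc hlc]]; first by rewrite hTc1 in hT1.
  have [M hM] := iter_mx p q lc.
  rewrite -hTc in hM.
  rewrite hM in hcyc.
  have /dvdzP[k hk] := vec_lemma hcyc hodd.
  have hdet : Gseq (Acat p q) Tc - 2 = (- k) * 2 ^+ (lc.+1 + e).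
    have := det2_sub1 (catC p%:Z q%:Z ^+ Tc).
    rewrite detCn -G_tr hM.
    have -> : 1 + 2 ^+ lc.+1 *: M - 1 = 2 ^+ lc.+1 *: M by rewrite addrC addKr.
    rewrite det2Z => h.
    have -> : Gseq (Acat p q) Tc - 2 = - (2 ^+ lc.+1 * (2 ^+ lc.+1 * det2 M)).
      rewrite -mulrA in h; rewrite h; ring.
    rewrite hk exprD; ring.
  rewrite /e_0 (negbTE hT1) in he.
  clear hcyc hk.
  case: lc hTc hlc hM hdet he => [|l] hTc hlc hM hdet he.
  + rewrite /= in he.
    have [[D [u [hD hDle]]] _] := base_val hp hq.
    rewrite expn0 mul1n in hTc; subst Tc.
    apply: (@pow_odd_contra (1 + e) D u); first by lia.
    rewrite -hD hdet; apply/dvdzP; exists (-k); by [].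
  + have [d [u [hD hDle]]] := iter_val hp hq l.
    rewrite -hTc in hD.
    rewrite /= in he.
    apply: (@pow_odd_contra (l.+2 + e) (d + 3) u); first by lia.
    rewrite -hD hdet; apply/dvdzP; exists (-k); by [].
Qed.
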